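(* Let $\mathcal{F}$ be a representable flag matroid on $[n]$. Then the associated polymatroid $\mathcal{M}(\mathcal{F})$ is a representable polymatroid.
   Context: For a $k$-dimensional subspace $V\subseteq\mathbb{C}^n$, choose a $k\times n$ matrix whose rows span $V$; the matroid $M_V$ on $[n]$ has as bases the $k$-subsets of columns with nonzero maximal minor. A flag matroid of rank $\mathbf{k}=(k_1\le\dots\le k_s)$ on $[n]$ is a collection of set-theoretic flags $F^1\subseteq\dots\subseteq F^s$ with $|F^i|=k_i$; it is representable if there is a flag of subspaces $V_1\subseteq\dots\subseteq V_s\subsetneq\mathbb{C}^n$, $\dim V_i=k_i$, such that $\mathcal{F}$ consists exactly of the flags $B_1\subseteq\dots\subseteq B_s$ with each $B_i$ a basis of $M_{V_i}$. The base polytope of $\mathcal{F}$ is $P(\mathcal{F})=\mathrm{conv}\{\sum_i\mathbf{e}_{F^i}:F\in\mathcal{F}\}$, with $\mathbf{e}_B$ the indicator vector of $B$. A polymatroid on $E$ is given by a rank function $r:\mathcal{P}(E)\to\mathbb{Z}_{\ge0}$, $r(\emptyset)=0$, monotone and submodular; its base polytope is $\{x\in\mathbb{R}^E_{\ge0}:x\cdot\mathbf{e}_U\le r(U)\ \forall U,\ x\cdot\mathbf{e}_E=r(E)\}$, and a polymatroid is determined by its base polytope. The polytope $P(\mathcal{F})$ is the base polytope of a polymatroid; this polymatroid is denoted $\mathcal{M}(\mathcal{F})$. A polymatroid on $E$ is representable if there is a vector space $V$ and a map $\phi$ from $E$ to the set of subspaces of $V$ such that $r(A)=\dim\sum_{a\in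 A}\phi(a)$ for all $A\subseteq E$. *)

(* Defs.v *)
From mathcomp Require Import all_boot all_order all_algebra.
From mathcomp Require Import Rstruct complex.
Set Implicit Arguments. Unset Strict Implicit. Unset Printing Implicit Defensive.
Import Order.TTheory GRing.Theory Num.Theory.
Local Open Scope ring_scope.

Notation Real := Rdefinitions.R.
Notation Cplx := (complex Rdefinitions.R).

Definition flag (s n : nat) := {ffun 'I_s -> {set 'I_n}}.

(* B is a basis of the matroid M_V, where V is the row space of the k x n
   matrix A: B is the set of k columns indexed by some f : 'I_k -> 'I_n
   and the corresponding maximal minor is nonzero *)
Definition is_basis_of_mx (k n : nat) (A : 'M[Cplx]_(k, n)) (B : {set 'I_n}) : Prop :=
  exists f : 'I_k -> 'I_n, B = f @: [set: 'I_k] /\ \det (colsub f A) != 0.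

Definition representable_flag_matroid (s n : nat) (k : 'I_s -> nat)
    (F : {set flag s n}) : Prop :=
  (forall i j : 'I_s, (i <= j)%N -> (k i <= k j)%N) /\
  exists A : forall i : 'I_s, 'M[Cplx]_(k i, n),
    (forall i, \rank (A i) = k i) /\
    (forall i j : 'I_s, (i <= j)%N -> (A i <= A j)%MS) /\
    (forall i, (k i < n)%N) /\
    (forall f : flag s n,
       f \in F <-> ((forall i j : 'I_s, (i <= j)%N -> f i \subset f j) /\
                    (forall i, is_basis_of_mx (A i) (f i)))).

Definition flag_base_polytope (s n : nat) (F : {set flag s n}) (x : 'I_n -> Real) : Prop :=
  exists lam : flag s n -> Real,
    (forall f, 0 <= lam f) /\ \sum_(f in F) lam f = 1 /\
    forall j : 'I_n, x j = \sum_(f in F) lam f * (\sum_(i < s) (j \in f i)%:R).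

Definition polymatroid (n : nat) (r : {set 'I_n} -> nat) : Prop :=
  r set0 = 0%N /\
  (forall A B : {set 'I_n}, A \subset B -> (r A <= r B)%N) /\
  (forall A B : {set 'I_n}, (r (A :|: B) + r (A :&: B) <= r A + r B)%N).

Definition polymatroid_base_polytope (n : nat) (r : {set 'I_n} -> nat) (x : 'I_n -> Real) : Prop :=
  (forall j, 0 <= x j) /\
  (forall U : {set 'I_n}, \sum_(j in U) x j <= (r U)%:R) /\
  \sum_(j < n) x j = (r [set: 'I_n])%:R.

(* representable polymatroid: subspaces phi(a) of V = C^d (row spaces of
   square matrices), r(A) = dim sum_{a in A} phi(a) *)
Definition representable_polymatroid (n : nat) (r : {set 'I_n} -> nat) : Prop :=
  exists (d : nat) (phi : 'I_n -> 'M[Cplx]_d),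
    forall U : {set 'I_n}, r U = \rank (\sum_(a in U) phi a)%MS.

(* Main.v *)
Require Import Defs.
From mathcomp Require Import all_boot all_order all_algebra.
From mathcomp Require Import Rstruct complex.
From mathcomp Require Import ring lra zify.
Set Implicit Arguments. Unset Strict Implicit. Unset Printing Implicit Defensive.
Import Order.TTheory GRing.Theory Num.Theory.
Local Open Scope ring_scope.



Section Span.
Variables (K : fieldType) (n m : nat) (C : 'M[K]_(n, m)).

Definition Ssp (U : {set 'I_n}) : 'M[K]_m := (\sum_(a in U) <<row a C>>)%MS.
Definition rk (U : {set 'I_n}) : nat := \rank (Ssp U).

Lemma row_Ssp a (U : {set 'I_n}) : a \in U -> (row a C <= Ssp U)%MS.
Proof. by move=> aU; apply: (sumsmx_sup a) => //; rewrite genmxE. Qed.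

Lemma Ssp_sub (U V : {set 'I_n}) : U \subset V -> (Ssp U <= Ssp V)%MS.
Proof.
move=> /subsetP UV; apply/sumsmx_subP => a aU; rewrite genmxE.
exact: row_Ssp (UV a aU).
Qed.

Lemma Ssp_subP (U : {set 'I_n}) p (B : 'M_(p, m)) : (forall a, a \in U -> (row a C <= B)%MS) -> (Ssp U <= B)%MS.
Proof. by move=> H; apply/sumsmx_subP => a aU; rewrite genmxE; apply: H. Qed.

Lemma rk_mono (U V : {set 'I_n}) : U \subset V -> (rk U <= rk V)%N.
Proof. by move=> UV; apply: mxrankS; apply: Ssp_sub. Qed.

Lemma rk0 : rk set0 = 0%N.
Proof. by rewrite /rk /Ssp big_set0 mxrank0. Qed.

Lemma rk_submod (U V : {set 'I_n}) : (rk (U :|: V) + rk (U :&: V) <= rk U + rk V)%N.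
Proof.
rewrite /rk -[(\rank (Ssp U) + _)%N]mxrank_sum_cap leq_add //; apply: mxrankS.
  apply: Ssp_subP => a; rewrite inE => /orP[aU|aV].
    exact: submx_trans (row_Ssp aU) (addsmxSl _ _).
  exact: submx_trans (row_Ssp aV) (addsmxSr _ _).
by rewrite sub_capmx !Ssp_sub // ?subsetIl ?subsetIr.
Qed.

Lemma rk_setT : rk setT = \rank C.
Proof.
rewrite /rk; apply/eqmx_rank/andP; split.
  by apply: Ssp_subP => a _; apply: row_sub.
by apply/row_subP => a; apply: row_Ssp; rewrite inE.
Qed.

Lemma rk_add a (U : {set 'I_n}) : rk (a |: U) = (rk U + ~~ (row a C <= Ssp U)%MS)%N.
Proof.
have sub1 : (Ssp U <= Ssp (a |: U))%MS by apply: Ssp_sub; apply: subsetUr.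
have sub2 : (Ssp (a |: U) <= Ssp U + row a C)%MS.
  apply: Ssp_subP => b; rewrite !inE => /orP[/eqP->|bU].
    exact: addsmxSr.
  exact: submx_trans (row_Ssp bU) (addsmxSl _ _).
case: (boolP (row a C <= Ssp U)%MS) => H /=.
  rewrite /rk addn0; apply/eqmx_rank/andP; split => //.
  by apply: submx_trans sub2 _; rewrite addsmx_sub submx_refl.
apply/eqP; rewrite eqn_leq; apply/andP; split.
  apply: leq_trans (mxrankS sub2) _.
  apply: leq_trans (mxrank_adds_leqif _ _) _.
  by rewrite leq_add2l rank_leq_row.
rewrite addn1 ltn_neqAle (mxrankS sub1) andbT.
rewrite (mxrank_leqif_sup sub1).
apply: contra H => H; exact: submx_trans (row_Ssp (setU11 a U)) H.
Qed.

Lemma rk_card (U : {set 'I_n}) : (rk U <= #|U|)%N.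
Proof.
have [b] := ubnP #|U|; elim: b U => // b IH U.
case: (set_0Vmem U) => [->|[a aU]]; first by rewrite rk0.
rewrite (cardsD1 a U) aU ltnS => Hc.
have -> : rk U = rk (a |: U :\ a) by rewrite setD1K.
rewrite rk_add; apply: leq_trans (leq_add (IH _ Hc) (leq_b1 _)) _.
by rewrite addn1.
Qed.

End Span.



Section Basis.
Variables (k n : nat) (A : 'M[Cplx]_(k, n)).

Lemma tr_colsub (f : 'I_k -> 'I_n) : (colsub f A)^T = rowsub f A^T.
Proof. by apply/matrixP => i j; rewrite !mxE. Qed.

Lemma rowsub_rank (f : 'I_k -> 'I_n) :
  (\det (colsub f A) != 0) = (\rank (rowsub f A^T) == k).
Proof.
by rewrite -det_tr tr_colsub -unitfE -unitmxE -row_free_unit.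
Qed.

Lemma basis_rk B : is_basis_of_mx A B -> #|B| = k /\ rk A^T B = k.
Proof.
case=> f [-> hdet]; rewrite rowsub_rank in hdet.
have sub : (rowsub f A^T <= Ssp A^T (f @: [set: 'I_k]))%MS.
  apply/row_subP => j; rewrite row_rowsub; apply: row_Ssp.
  by apply: imset_f; rewrite inE.
have h1 := mxrankS sub; rewrite (eqP hdet) in h1.
have h2 := rk_card A^T (f @: [set: 'I_k]).
have h3 : (#|f @: [set: 'I_k]| <= k)%N.
  by apply: leq_trans (leq_imset_card _ _) _; rewrite cardsT card_ord.
split; apply/eqP; rewrite eqn_leq ?h3 //.
  by apply: leq_trans h1 h2.
rewrite h1 andbT; exact: leq_trans h2 h3.
Qed.

Lemma rk_basis (B : {set 'I_n}) : #|B| = k -> rk A^T B = k -> is_basis_of_mx A B.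
Proof.
move=> hB hr.
pose f (j : 'I_k) : 'I_n := enum_val (cast_ord (esym hB) j).
have fB : forall a, a \in B -> exists j, a = f j.
  move=> a aB; exists (cast_ord hB (enum_rank_in aB a)).
  by rewrite /f cast_ordK enum_rankK_in.
exists f; split.
  apply/setP => a; apply/idP/idP.
    by move=> aB; have [j ->] := fB a aB; apply: imset_f; rewrite inE.
  by case/imsetP => j _ ->; apply: enum_valP.
rewrite rowsub_rank eqn_leq rank_leq_row /= -{1}hr.
apply: mxrankS; apply: Ssp_subP => a aB.
have [j ->] := fB a aB.
by rewrite -row_rowsub row_sub.
Qed.

End Basis.



Section Repr.
Variables (K : fieldType) (s n : nat) (k : 'I_s -> nat)
  (C : forall i : 'I_s, 'M[K]_(n, k i)).

Let d := (\sum_(i < s) k i)%N.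
Let Emb (i : 'I_s) : 'M[K]_(k i, d) := submxcol (1%:M : 'M[K]_d) i.

Lemma mxdiag_col (X : forall i, 'M[K]_(k i)) :
  \mxdiag_i X i = \mxcol_i (X i *m Emb i).
Proof.
by rewrite -[LHS]mulmx1 -[1%:M in LHS](submxcolK (p_ := k)) mul_mxdiag_mxcol.
Qed.

Lemma repr_sum :
  exists phi : 'I_n -> 'M[K]_d, forall U : {set 'I_n},
    (\sum_(i < s) rk (C i) U)%N = \rank (\sum_(a in U) phi a)%MS.
Proof.
exists (fun a => \mxdiag_i <<row a (C i)>>%MS) => U.
rewrite -(rank_mxdiag (fun i => Ssp (C i) U)); apply/eqmx_rank.
rewrite mxdiag_col; apply/eqmxP.
apply: eqmx_trans (eqmx_col _) _.
apply: eqmx_sym.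
have E1 : forall a, (\mxdiag_i <<row a (C i)>> :=: \sum_i <<<<row a (C i)>>%MS *m Emb i>>)%MS.
  by move=> a; rewrite mxdiag_col; exact: eqmx_col.
apply: eqmx_trans (eqmx_sums (fun a _ => E1 a)) _.
rewrite exchange_big /=; apply: eqmx_sums => i _.
apply: eqmx_trans _ (eqmx_sym (genmxE _)).
exact: eqmx_sym (sumsmxMr_gen _ _ _).
Qed.
End Repr.



Lemma exists_minR (I : finType) (P : pred I) (F : I -> Real) i0 :
  P i0 -> exists2 i, P i & forall j, P j -> F i <= F j.
Proof.
move=> Pi0.
have := @extremumP Real I <=%R i0 P F (@lexx _ _) (fun x y z => @le_trans _ _ x y z) (@le_total _ _) Pi0.
by case=> i Pi H; exists i.
Qed.

Section Poly.
Variables (n : nat) (r : {set 'I_n} -> nat).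
Hypothesis r0 : r set0 = 0%N.
Hypothesis rmono : forall A B : {set 'I_n}, A \subset B -> (r A <= r B)%N.
Hypothesis rsub : forall A B : {set 'I_n}, (r (A :|: B) + r (A :&: B) <= r A + r B)%N.

Definition xs (x : 'I_n -> Real) (U : {set 'I_n}) := \sum_(j in U) x j.
Definition inB (x : 'I_n -> Real) :=
  (forall U, xs x U <= (r U)%:R) /\ xs x setT = (r setT)%:R.
Definition tight x U := xs x U == (r U)%:R.
Definition nontight x := [set U | ~~ tight x U].

Lemma xs_UI x U V : xs x (U :|: V) + xs x (U :&: V) = xs x U + xs x V.
Proof.
rewrite /xs !(big_mkcond (fun j => j \in _)) -!big_split; apply: eq_bigr => j _.
rewrite !inE; case: (j \in U); case: (j \in V) => /=; rewrite ?addr0 ?add0r //.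
Qed.

Lemma tightUI x U V : inB x -> tight x U -> tight x V ->
  tight x (U :|: V) && tight x (U :&: V).
Proof.
move=> [hle _] /eqP tU /eqP tV.
have h1 := hle (U :|: V); have h2 := hle (U :&: V).
have h3 : ((r (U :|: V))%:R + (r (U :&: V))%:R <= (r U)%:R + (r V)%:R :> Real).
  by rewrite -!natrD ler_nat rsub.
have h4 := xs_UI x U V; rewrite tU tV in h4.
by rewrite /tight; apply/andP; split; apply/eqP; lra.
Qed.

Lemma inB_ge0 x : inB x -> forall j, 0 <= x j.
Proof.
move=> [hle htot] j.
have e : xs x setT = x j + xs x (setT :\ j).
  by rewrite /xs (big_setD1 j) ?inE.
have h1 := hle (setT :\ j).
have h2 : ((r (setT :\ j))%:R <= (r setT)%:R :> Real) by rewrite ler_nat rmono ?subsetT.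
lra.
Qed.

Lemma sum_ind (U : {set 'I_n}) a :
  \sum_(j in U) ((j == a)%:R : Real) = (a \in U)%:R.
Proof.
case: (boolP (a \in U)) => aU.
  rewrite (bigD1 a) //= eqxx big1 ?addr0 // => j /andP[_ /negbTE ->] //.
by rewrite big1 // => j jU; case: eqP => // ja; move: aU; rewrite -ja jU.
Qed.

Definition mv (x : 'I_n -> Real) t a b := fun j => x j + t * ((j == a)%:R - (j == b)%:R).

Lemma xs_mv x t a b U :
  xs (mv x t a b) U = xs x U + t * ((a \in U)%:R - (b \in U)%:R).
Proof.
by rewrite /xs /mv big_split /= -mulr_sumr big_split /= sumrN !sum_ind.
Qed.

Lemma move x a b : inB x -> a != b -> (forall U, tight x U -> (a \in U) = (b \in U)) ->
  exists t, 0 < t /\ inB (mv x t a b) /\ (#|nontight (mv x t a b)| < #|nontight x|)%N.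
Proof.
move=> [hle htot] ab hsep.
pose Sab := fun U : {set 'I_n} => (a \in U) && (b \notin U).
have Sa : Sab [set a] by rewrite /Sab !inE eqxx eq_sym ab.
case: (exists_minR (fun U => (r U)%:R - xs x U) Sa) => U0 SU0 minU0.
set t := (r U0)%:R - xs x U0.
have tpos : 0 < t.
  rewrite lt_neqAle; apply/andP; split; last by have := hle U0; rewrite /t; lra.
  apply/negP => /eqP t0.
  have tU0 : tight x U0 by rewrite /tight; apply/eqP; rewrite /t in t0; lra.
  by move: SU0; rewrite /Sab (hsep _ tU0) andbN.
exists t; split => //.
have main : forall U, tight x U -> tight (mv x t a b) U.
  move=> U tU; rewrite /tight xs_mv (hsep _ tU) subrr mulr0 addr0; exact: tU.
split; [split|].
- move=> U; rewrite xs_mv; have := hle U.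
  case aU: (a \in U); case bU: (b \in U) => /=; rewrite ?mulr1n ?mulr0n.
  + lra.
  + have : Sab U by rewrite /Sab aU bU.
    move/minU0; rewrite /t; lra.
  + lra.
  + lra.
- by rewrite xs_mv !inE /= subrr mulr0 addr0.
- apply: proper_card; rewrite properE; apply/andP; split.
    by apply/subsetP => U; rewrite !inE; apply: contra; apply: main.
  apply/subsetPn; exists U0; rewrite !inE ?negbK.
    apply/negP => /eqP tU0.
    by move: tpos; rewrite /t tU0 subrr ltxx.
  rewrite /tight xs_mv; move: SU0; rewrite /Sab => /andP[-> /negbTE ->] /=.
  by rewrite mulr1n subr0 mulr1 /t; apply/eqP; ring.
Qed.

Definition ext x := [forall P : {set 'I_n}, (tight x P && (P != setT)) ==>
   [exists b, (b \notin P) && tight x (b |: P)]].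

Lemma split_ab x : inB x -> ~~ ext x ->
  exists a b, a != b /\ forall U, tight x U -> (a \in U) = (b \in U).
Proof.
move=> hx; rewrite negb_forall => /existsP [P].
rewrite negb_imply => /andP [/andP [tP PT] noext].
have [hle htot] := hx.
case: (@arg_minnP _ setT (fun Q => tight x Q && (P \proper Q)) (fun Q => #|Q|)).
  by rewrite /tight htot eqxx properT.
move=> Q /andP [tQ PQ] minQ.
have [PsQ [a aQ aP]] := properP PQ.
have aPQ : (a |: P) \proper Q.
  rewrite properEneq; apply/andP; split.
    apply/negP => /eqP e; move: noext; apply/negP; rewrite negbK.
    by apply/existsP; exists a; rewrite aP e tQ.
  by rewrite subUset sub1set aQ PsQ.
have [_ [b bQ baP]] := properP aPQ.
have claim : forall c d U, c \in Q -> c \notin P -> d \in Q -> d \notin P ->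
    tight x U -> c \in U -> d \notin U -> False.
  move=> c d U cQ cP dQ dP tU cU dU.
  have /andP [_ tUQ] := tightUI hx tU tQ.
  rewrite setIC in tUQ.
  set W := P :|: (Q :&: U).
  have tW : tight x W by have /andP [h _] := tightUI hx tP tUQ.
  have PW : P \proper W.
    apply/properP; split; first exact: subsetUl.
    by exists c => //; rewrite !inE cQ cU orbT.
  have := minQ W; rewrite tW PW => /(_ isT).
  have WQ : W \proper Q.
    apply/properP; split; first by rewrite subUset PsQ subsetIl.
    exists d => //; rewrite !inE negb_or dP /= negb_and dU orbT //.
  by move/proper_card: WQ; rewrite ltnNge => /negbTE ->.
have bP : b \notin P by move: baP; rewrite !inE negb_or => /andP[].
exists a, b; split.
  by apply/negP => /eqP e; move: baP; rewrite e !inE eqxx.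
move=> U tU; apply/idP/idP => [aU|bU]; apply/negPn/negP => H.
  exact: (claim a b U).
exact: (claim b a U).
Qed.

End Poly.



Lemma sum_mem n (U B : {set 'I_n}) : (\sum_(j in U) (j \in B) = #|B :&: U|)%N.
Proof.
transitivity (\sum_(j in U | j \in B) 1)%N.
  by rewrite big_mkcondr; apply: eq_bigr => j _; case: (j \in B).
by rewrite sum1_card; apply: eq_card => j; rewrite !inE andbC.
Qed.

Lemma big_setT (R : Type) (idx : R) (op : R -> R -> R) (I : finType) (G : I -> R) :
  \big[op/idx]_(i in [set: I]) G i = \big[op/idx]_i G i.
Proof. by apply: eq_bigl => i; rewrite inE. Qed.

Section Flag.
Variables (s n : nat) (k : 'I_s -> nat) (A : forall i : 'I_s, 'M[Cplx]_(k i, n))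
  (F : {set flag s n}).
Hypothesis hrank : forall i, \rank (A i) = k i.
Hypothesis hsub : forall i j : 'I_s, (i <= j)%N -> (A i <= A j)%MS.
Hypothesis hF : forall f : flag s n,
  f \in F <-> ((forall i j : 'I_s, (i <= j)%N -> f i \subset f j) /\
               (forall i, is_basis_of_mx (A i) (f i))).

Local Notation C i := ((A i)^T).

Definition rr (U : {set 'I_n}) : nat := \sum_(i < s) rk (C i) U.

Lemma rr0 : rr set0 = 0%N.
Proof. by rewrite /rr big1 // => i _; rewrite rk0. Qed.

Lemma rr_mono (U V : {set 'I_n}) : U \subset V -> (rr U <= rr V)%N.
Proof. by move=> UV; apply: leq_sum => i _; apply: rk_mono. Qed.

Lemma rr_sub (U V : {set 'I_n}) : (rr (U :|: V) + rr (U :&: V) <= rr U + rr V)%N.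
Proof. by rewrite /rr -!big_split; apply: leq_sum => i _; apply: rk_submod. Qed.

Lemma rk_full i : rk (C i) setT = k i.
Proof. by rewrite rk_setT mxrank_tr hrank. Qed.

Lemma quot (i j : 'I_s) (a : 'I_n) (U : {set 'I_n}) : (i <= j)%N -> (row a (C j) <= Ssp (C j) U)%MS ->
  (row a (C i) <= Ssp (C i) U)%MS.
Proof.
move=> ij; have /submxP [D eD] := hsub ij.
have eC : C i = C j *m D^T by rewrite eD trmx_mul.
move=> h; rewrite eC row_mul.
apply: submx_trans (submxMr _ h) _.
rewrite (sumsmxMr_gen _ _ _); apply/sumsmx_subP => b bU.
by rewrite genmxE (eqmxMr _ (genmxE _)) -row_mul -eC row_Ssp.
Qed.

Definition vf (f : flag s n) (j : 'I_n) : nat := \sum_(i < s) (j \in f i).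

Lemma flag_le f (U : {set 'I_n}) : f \in F -> (\sum_(j in U) vf f j <= rr U)%N.
Proof.
move=> /hF [_ hb]; rewrite /rr /vf exchange_big /=; apply: leq_sum => i _.
rewrite sum_mem; have [hc hr] := basis_rk (hb i).
apply: leq_trans (rk_mono _ (subsetIr (f i) U)).
have h := rk_submod (C i) (f i :&: U) (f i :\: U).
rewrite setID in h.
rewrite (_ : (f i :&: U) :&: (f i :\: U) = set0) in h; last first.
  by apply/setP => j; rewrite !inE; case: (j \in U); rewrite ?andbF.
rewrite rk0 addn0 hr in h.
have h2 := rk_card (C i) (f i :\: U).
have h3 := cardsID U (f i); rewrite hc in h3.
by have := leq_trans h (leq_add (leqnn _) h2); rewrite -{1}h3 leq_add2r.
Qed.

Lemma flag_tot f : f \in F -> (\sum_j vf f j = rr setT)%N.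
Proof.
move=> /hF [_ hb]; rewrite /rr /vf exchange_big /=; apply: eq_bigr => i _.
have := sum_mem setT (f i); rewrite setIT => e.
rewrite (eq_bigl (fun j => j \in [set: 'I_n])); last by move=> j; rewrite inE.
by rewrite e rk_full; case: (basis_rk (hb i)).
Qed.

Lemma vertex (x : 'I_n -> Real) : inB rr x -> ext rr x ->
  exists2 f, f \in F & forall j, x j = (vf f j)%:R.
Proof.
move=> hx hext.
have step : forall t, (t <= n)%N -> exists P : {set 'I_n}, exists B : 'I_s -> {set 'I_n},
   [/\ tight rr x P /\ #|P| = t, (forall i, B i \subset P),
       (forall i, (Ssp (C i) P <= Ssp (C i) (B i))%MS),
       (forall i, rk (C i) (B i) = #|B i|) &
       ((forall i j : 'I_s, (i <= j)%N -> B i \subset B j) /\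
       (forall a, a \in P -> x a = (\sum_(i < s) (a \in B i))%:R))].
  elim => [_|t IH ht].
    exists set0, (fun _ => set0); split.
    - by rewrite /tight /xs big_set0 rr0 cards0.
    - by move=> i; rewrite sub0set.
    - by move=> i; rewrite /Ssp big_set0 sub0mx.
    - by move=> i; rewrite rk0 cards0.
    - by split; [move=> i j _; rewrite sub0set | move=> a; rewrite inE].
  have [P [B [[tP cP] BP sP rB [nB xP]]]] := IH (ltnW ht).
  have PT : P != setT.
    by apply/eqP => e; move: ht; rewrite -cP e cardsT card_ord ltnn.
  move/forallP: hext => /(_ P) /implyP; rewrite tP PT => /(_ isT).
  move=> /existsP [b /andP [bP tbP]].
  pose B' i := if (row b (C i) <= Ssp (C i) P)%MS then B i else b |: B i.
  have bB : forall i, b \notin B i.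
    by move=> i; apply/negP => bBi; move: bP; rewrite (subsetP (BP i) _ bBi).
  have BB' : forall i, B i \subset B' i.
    by move=> i; rewrite /B'; case: ifP => _ //; apply: subsetUr.
  have inB' : forall i, (b \in B' i) = ~~ (row b (C i) <= Ssp (C i) P)%MS.
    by move=> i; rewrite /B'; case: ifP => _; rewrite ?(negbTE (bB i)) ?setU11.
  exists (b |: P), B'; split.
  - by rewrite tbP cardsU1 bP cP.
  - move=> i; rewrite /B'; case: ifP => _.
      exact: subset_trans (BP i) (subsetUr _ _).
    exact: setUS.
  - move=> i; apply: Ssp_subP => a; rewrite in_setU1 => /orP [/eqP ->|aP].
      case h: (row b (C i) <= Ssp (C i) P)%MS.
        exact: submx_trans h (submx_trans (sP i) (Ssp_sub _ (BB' i))).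
      by apply: row_Ssp; rewrite inB' h.
    exact: submx_trans (row_Ssp _ aP) (submx_trans (sP i) (Ssp_sub _ (BB' i))).
  - move=> i; rewrite /B'; case: ifP => h; first exact: rB.
    rewrite rk_add rB cardsU1 (bB i) addnC /=.
    suff -> : (row b (C i) <= Ssp (C i) (B i))%MS = false by [].
    apply/negP => h2; move/negbT: h; apply/negP; rewrite negbK.
    exact: submx_trans h2 (Ssp_sub _ (BP i)).
  split.
  - move=> i j ij; rewrite /B'.
    case hi: (row b (C i) <= Ssp (C i) P)%MS; case hj: (row b (C j) <= Ssp (C j) P)%MS.
    + exact: nB.
    + exact: subset_trans (nB _ _ ij) (subsetUr _ _).
    + by move: hi; rewrite (quot ij hj).
    + exact: setUS (nB _ _ ij).
  - move=> a; rewrite in_setU1 => /orP [/eqP ->|aP].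
      have e1 : xs x (b |: P) = x b + xs x P by rewrite /xs big_setU1.
      have e2 : rr (b |: P) = (rr P + \sum_(i < s) (b \in B' i))%N.
        by rewrite /rr -big_split; apply: eq_bigr => i _; rewrite rk_add inB'.
      move/eqP: tbP; move/eqP: tP; rewrite e1 e2 natrD => tP tbP.
      by rewrite tP in tbP; lra.
    rewrite xP //; congr (_%:R); apply: eq_bigr => i _.
    have ab : a != b by apply/negP => /eqP e; move: bP; rewrite -e aP.
    by rewrite /B'; case: ifP => _ //; rewrite in_setU1 (negbTE ab).
have [P [B [[tP cP] BP sP rB [nB xP]]]] := step n (leqnn n).
have PT : P = setT.
  by apply/eqP; rewrite eqEcard subsetT cardsT card_ord cP leqnn.
have rkB : forall i, rk (C i) (B i) = k i.
  move=> i; apply: (etrans _ (rk_full i)); rewrite -PT; apply/eqP; rewrite eqn_leq.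
  by rewrite (mxrankS (sP i)) rk_mono.
exists [ffun i => B i].
  apply/hF; split.
    by move=> i j ij; rewrite !ffunE; apply: nB.
  move=> i; rewrite ffunE; apply: rk_basis => //.
  by rewrite -rB rkB.
move=> j; rewrite xP ?PT ?inE //; congr (_%:R); apply: eq_bigr => i _.
by rewrite ffunE.
Qed.

Lemma vR_vf (f : flag s n) j :
  (\sum_(i < s) ((j \in f i)%:R : Real)) = (vf f j)%:R.
Proof. by rewrite /vf natr_sum. Qed.

Lemma polytope_sub x : flag_base_polytope F x -> polymatroid_base_polytope rr x.
Proof.
move=> [lam [hl0 [hl1 hx]]].
have ex : forall U : {set 'I_n}, \sum_(j in U) x j =
    \sum_(f in F) lam f * (\sum_(j in U) vf f j)%:R.
  move=> U; under eq_bigr => j _ do rewrite hx.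
  rewrite exchange_big /=; apply: eq_bigr => f _.
  by rewrite natr_sum mulr_sumr; apply: eq_bigr => j _; rewrite vR_vf.
split; [|split].
- move=> j; rewrite hx; apply: sumr_ge0 => f _; apply: mulr_ge0 => //.
  by rewrite vR_vf ler0n.
- move=> U; rewrite ex.
  apply: le_trans (_ : \sum_(f in F) lam f * (rr U)%:R <= _).
    apply: ler_sum => f fF; apply: ler_wpM2l => //.
    by rewrite ler_nat flag_le.
  by rewrite -mulr_suml hl1 mul1r.
- have := ex setT; rewrite big_setT => ->.
  rewrite (eq_bigr (fun f => lam f * (rr setT)%:R)).
    by rewrite -mulr_suml hl1 mul1r.
  by move=> f fF; rewrite big_setT flag_tot.
Qed.

Lemma vertex_poly f x : f \in F -> (forall j, x j = (vf f j)%:R) -> flag_base_polytope F x.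
Proof.
move=> fF ex; exists (fun g => (g == f)%:R); split; [|split].
- by move=> g; rewrite ler0n.
- by rewrite (bigD1 f) //= eqxx big1 ?addr0 // => g /andP [_ /negbTE ->].
- move=> j; rewrite ex (bigD1 f) //= eqxx mul1r vR_vf big1 ?addr0 //.
  by move=> g /andP [_ /negbTE ->]; rewrite mul0r.
Qed.

Lemma polytope_sup x : polymatroid_base_polytope rr x -> flag_base_polytope F x.
Proof.
move=> [_ [hle htot]].
have hx : inB rr x by split => //; rewrite /xs big_setT.
suff : forall N x, (#|nontight rr x| < N)%N -> inB rr x -> flag_base_polytope F x.
  by move/(_ _ x (ltnSn _)); apply.
elim => // N IH {hle htot hx} x hN hx.
case: (boolP (ext rr x)) => he.
  have [f fF ef] := vertex hx he.
  exact: vertex_poly fF ef.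
have [a [b [ab hab]]] := split_ab rr_sub hx he.
have [t1 [t1p [hy cy]]] := move hx ab hab.
have hba : forall U, tight rr x U -> (b \in U) = (a \in U).
  by move=> U tU; rewrite hab.
have ba : b != a by rewrite eq_sym.
have [t2 [t2p [hz cz]]] := move hx ba hba.
have [ly [ly0 [ly1 ely]]] := IH _ (leq_trans cy hN) hy.
have [lz [lz0 [lz1 elz]]] := IH _ (leq_trans cz hN) hz.
have tp : 0 < t1 + t2 by apply: addr_gt0.
have ne : t1 + t2 != 0 by rewrite gt_eqF.
exists (fun f => (t2 * ly f + t1 * lz f) / (t1 + t2)); split; [|split].
- move=> f; apply: divr_ge0; last exact: ltW.
  by apply: addr_ge0; apply: mulr_ge0 => //; apply: ltW.
- rewrite -mulr_suml big_split /= -!mulr_sumr ly1 lz1 !mulr1 addrC.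
  by rewrite divff.
- move=> j.
  have e : \sum_(f in F) (t2 * ly f + t1 * lz f) / (t1 + t2) * (\sum_(i < s) (j \in f i)%:R)
      = (t2 * mv x t1 a b j + t1 * mv x t2 b a j) / (t1 + t2).
    rewrite ely elz !mulr_sumr -big_split mulr_suml; apply: eq_bigr => f _.
    by rewrite /=; field.
  by rewrite e /mv; field.
Qed.

End Flag.

Theorem proposition7p5 (s n : nat) (k : 'I_s -> nat) (F : {set flag s n}) :
  representable_flag_matroid k F ->
  exists r : {set 'I_n} -> nat,
    polymatroid r /\
    (forall x : 'I_n -> Real, flag_base_polytope F x <-> polymatroid_base_polytope r x) /\
    representable_polymatroid r.
Proof.
move=> [_ [A [hrank [hsub [_ hF]]]]].
exists (rr A); split; [|split].
- split; [exact: rr0|split]; [exact: rr_mono | exact: rr_sub].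
- move=> x; split => h; [exact: (polytope_sub hrank hF h) | exact: (polytope_sup hrank hsub hF h)].
- have [phi hphi] := repr_sum (fun i => trmx (A i)).
  by exists _, phi.
Qed.
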